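(* Let $n\ge 3$. There exist infinitely many profiles $\mathbf{p}\in\mathbb{Q}^{n!}$ such that for every permutation $\pi\in S_n$ with $\pi(n)\neq 1$, there is some $\mathbf{w}(\pi)\in W$ with $T_{\mathbf{w}(\pi)}\mathbf{p}\in C_\pi$.
   Context: Work over $\mathbb{Q}$. Let $W=\{\mathbf{x}\in\mathbb{Q}^n : x_1>x_2>\cdots>x_n,\ x_1+\cdots+x_n=0\}$ (strict weighting vectors). For $\pi\in S_n$, let $C_\pi=\{\mathbf{x}\in\mathbb{Q}^n : x_{\pi(1)}>x_{\pi(2)}>\cdots>x_{\pi(n)}\}$. Label the permutations of $S_n$ as $\sigma_1,\dots,\sigma_{n!}$ in lexicographic order of one-line notation, and let $R_\ell$ be the $n\times n$ permutation matrix with $R_\ell(i,j)=1$ if $\sigma_\ell(j)=i$ and $0$ otherwise. For a weighting vector $\mathbf{w}$, $T_{\mathbf{w}}$ is the $n\times n!$ matrix whose $\ell$-th column is $R_\ell\mathbf{w}$, so for a profile $\mathbf{p}\in\mathbb{Q}^{n!}$ (where $p_\ell$ is the number of voters with preference $\sigma_\ell$, candidate $\sigma_\ell(k)$ being ranked $k$-th), $T_{\mathbf{w}}\mathbf{p}=\sum_{\ell=1}^{n!}p_\ell R_\ell\mathbf{w}$ is the results vector. *)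

(* Defs.v *)
From HB Require Import structures.
From mathcomp Require Import all_boot all_order all_algebra all_fingroup.
Set Implicit Arguments. Unset Strict Implicit. Unset Printing Implicit Defensive.
Import Order.TTheory GRing.Theory Num.Theory.

(* Candidates 1..n are represented by 'I_n (candidate k <-> index k-1).
   Permutations of S_n are {perm 'I_n}. *)

Fixpoint lex_leq (s t : seq nat) : bool :=
  match s, t with
  | [::], _ => true
  | _ :: _, [::] => false
  | x :: s', y :: t' => (x < y) || ((x == y) && lex_leq s' t')
  end.

Definition oneline (n : nat) (s : {perm 'I_n}) : seq nat :=
  [seq val (s i) | i <- enum 'I_n].

Definition perm_lex (n : nat) (s t : {perm 'I_n}) : bool :=
  lex_leq (oneline s) (oneline t).

Definition lex_perms (n : nat) : seq {perm 'I_n} :=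
  sort (@perm_lex n) (enum [set: {perm 'I_n}]).

(* sigma_l, for l = 1..n! (here l : 'I_(n`!), 0-indexed) *)
Definition sigma_l (n : nat) (l : 'I_(n`!)) : {perm 'I_n} :=
  nth 1%g (lex_perms n) l.

Local Open Scope ring_scope.

Definition Rmat (n : nat) (l : 'I_(n`!)) : 'M[rat]_n :=
  \matrix_(i < n, j < n) (if sigma_l l j == i then 1 else 0).

Definition Tmat (n : nat) (w : 'cV[rat]_n) : 'M[rat]_(n, n`!) :=
  \matrix_(i < n, l < n`!) (Rmat l *m w) i 0.

Definition in_W (n : nat) (x : 'cV[rat]_n) : Prop :=
  (forall i j : 'I_n, (i < j)%N -> x j 0 < x i 0) /\ \sum_(i < n) x i 0 = 0.

Definition in_C (n : nat) (pi : {perm 'I_n}) (x : 'cV[rat]_n) : Prop :=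
  forall i j : 'I_n, (i < j)%N -> x (pi j) 0 < x (pi i) 0.

(* Main.v *)
Require Import Defs.
From HB Require Import structures.
From mathcomp Require Import all_boot all_order all_algebra all_fingroup.
From mathcomp Require Import lra ring.
Import Order.TTheory GRing.Theory Num.Theory.
Local Open Scope ring_scope.

Lemma ineqA (N D l : rat) : 3 <= N -> (N - 1) * (2 * N * N) <= D -> l <= 4 * N * N * 0 + 2 * N * N + N ->
  N * (2 * N - 3) * l + (2 * N - 3 + 2) * (D * (-1)) < N * (2 * N - 3) * (0 - D) + (2 * N - 3 + 2) * (D * (N - 1)).
Proof.
move=> h3 hD hl.
have h1 : (2 * N - 3) * l < 2 * D by nra.
rewrite -subr_gt0.
have -> : N * (2 * N - 3) * (0 - D) + (2 * N - 3 + 2) * (D * (N - 1)) - (N * (2 * N - 3) * l + (2 * N - 3 + 2) * (D * (-1))) = N * (2 * D - (2 * N - 3) * l) by ring.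
apply: mulr_gt0; lra.
Qed.
Lemma ineqB (N D l : rat) : 3 <= N -> D <= (N - 1) * (2 * N * N + N) + (N - 1 - 1) * (4 * N * N) -> 4 * N * N * 1 + 2 * N * N + 1 <= l ->
  N * (2 * N - 3) * (0 - D) + (2 * N - 3 + 2) * (D * (N - 1)) < N * (2 * N - 3) * l + (2 * N - 3 + 2) * (D * (-1)).
Proof.
move=> h3 hD hl.
have h1 : 2 * D < (2 * N - 3) * l by nra.
rewrite -subr_gt0.
have -> : N * (2 * N - 3) * l + (2 * N - 3 + 2) * (D * (-1)) - (N * (2 * N - 3) * (0 - D) + (2 * N - 3 + 2) * (D * (N - 1))) = N * ((2 * N - 3) * l - 2 * D) by ring.
apply: mulr_gt0; lra.
Qed.

Section P.
Variable m : nat.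
Hypothesis hm : (1 < m.+1)%N.
Definition Zcyc := perm (@ordS_inj m.+1).
Definition sg (b : 'I_m.+1) : {perm 'I_m.+1} := tperm b ord_max.
Definition tau (b : 'I_m.+1) : {perm 'I_m.+1} := (tperm ord0 ord_max * sg b)%g.
Definition gprof (k1 k2 : rat) (s : {perm 'I_m.+1}) : rat :=
  k1 * ((s == Zcyc)%:R - (s == 1%g)%:R) +
  k2 * \sum_(b : 'I_m.+1 | (0 < b)%N) ((s == sg b)%:R - (s == tau b)%:R).

Lemma sum_ind (F : {perm 'I_m.+1} -> rat) t :
  \sum_s (s == t)%:R * F s = F t.
Proof.
rewrite (bigD1 t) //= eqxx mul1r big1 ?addr0 // => s /negbTE ->; by rewrite mul0r.
Qed.

Lemma sum_gprof (k1 k2 : rat) (F : {perm 'I_m.+1} -> rat) :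
  \sum_s gprof k1 k2 s * F s = k1 * (F Zcyc - F 1%g) +
     k2 * \sum_(b : 'I_m.+1 | (0 < b)%N) (F (sg b) - F (tau b)).
Proof.
rewrite /gprof.
under eq_bigr => s _ do rewrite mulrDl -!mulrA mulrBl big_distrl /=.
rewrite big_split /= -mulr_sumr -mulr_sumr; congr (_ * _ + _ * _).
  by rewrite sumrB !sum_ind.
rewrite exchange_big /=; apply: eq_bigr => b _.
under eq_bigr => s _ do rewrite mulrBl.
by rewrite sumrB !sum_ind.
Qed.

Lemma ZcycV (i : 'I_m.+1) : (Zcyc^-1)%g i = ord_pred i.
Proof. apply: (@ordS_inj m.+1); rewrite ord_predK; by move: (permKV Zcyc i); rewrite permE. Qed.

Lemma pair_diff (w : 'cV[rat]_m.+1) (i b : 'I_m.+1) : (0 < b)%N ->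
  w (((sg b)^-1)%g i) 0 - w (((tau b)^-1)%g i) 0 =
  (w ord0 0 - w ord_max 0) * ((i == ord0)%:R - (i == b)%:R).
Proof.
move=> hb.
have h0b : (ord0 : 'I_m.+1) != b by apply/eqP => /(congr1 val) /= e; rewrite -e in hb.
have h0L : (ord0 : 'I_m.+1) != ord_max by apply/eqP => /(congr1 val) /= e; by move: hm; rewrite -e.
rewrite /tau /sg invMg permM !tpermV.
have hL0 : (ord_max : 'I_m.+1) == ord0 = false by apply/negbTE; rewrite eq_sym.
case: (tpermP b ord_max i) => [->|->|hib hiL].
- rewrite tpermR eqxx [b == _]eq_sym (negbTE h0b) /=; lra.
- rewrite hL0 /=; case: (eqVneq b ord_max) => [->|hbL].
    rewrite tpermR /=; lra.
  have hb0 : (ord0 : 'I_m.+1) != b := h0b.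
  rewrite tpermD //; last by rewrite eq_sym.
  rewrite (_ : false%:R = 0 :> rat) //; lra.
- have /eqP/negbTE hib' := hib; rewrite hib'; case: (eqVneq i ord0) => [->|hi0].
    rewrite tpermL /=; lra.
  rewrite tpermD; [by rewrite !subrr mulr0 | by rewrite eq_sym | by rewrite eq_sym; apply/eqP].


Qed.

Lemma sum_sigma (n : nat) (F : {perm 'I_n} -> rat) :
  \sum_(l < n`!) F (sigma_l l) = \sum_(s : {perm 'I_n}) F s.
Proof.
have hsz : size (lex_perms n) = n`!.
  by rewrite /lex_perms size_sort -cardE cardsT card_Sn.
rewrite /sigma_l.
have -> : \sum_(l < n`!) F (nth 1%g (lex_perms n) l) =
          \sum_(s <- lex_perms n) F s.
  by rewrite (big_nth 1%g) hsz big_mkord.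
rewrite (perm_big (enum [set: {perm 'I_n}])); last by rewrite /lex_perms perm_sort.
by rewrite big_enum /=; apply: eq_bigl => x; rewrite inE.
Qed.

Lemma Rmat_w (n : nat) (l : 'I_(n`!)) (w : 'cV[rat]_n) (i : 'I_n) :
  (Rmat l *m w) i 0 = w ((sigma_l l)^-1 i)%g 0.
Proof.
rewrite !mxE (bigD1 ((sigma_l l)^-1 i)%g) //= mxE permKV eqxx mul1r big1 ?addr0 //.
move=> j hj; rewrite mxE; case: eqP => [e|]; last by rewrite mul0r.
by move: hj; rewrite -e permK eqxx.
Qed.

Definition p0 (k1 k2 : rat) : 'cV[rat]_(m.+1`!) :=
  \col_(l < m.+1`!) gprof k1 k2 (sigma_l l).

Definition sb (i : 'I_m.+1) : rat :=
  \sum_(b : 'I_m.+1 | (0 < b)%N) ((i == ord0)%:R - (i == b)%:R).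

Lemma Tp (k k1 k2 : rat) (w : 'cV[rat]_m.+1) (i : 'I_m.+1) :
  (Tmat w *m (k *: p0 k1 k2)) i 0 =
  k * (k1 * (w (ord_pred i) 0 - w i 0) + k2 * ((w ord0 0 - w ord_max 0) * sb i)).
Proof.
rewrite mxE.
under eq_bigr => l _ do rewrite [Tmat w i l]mxE [(k *: p0 k1 k2) l 0]mxE [p0 k1 k2 l 0]mxE Rmat_w mulrCA.
rewrite -mulr_sumr; congr (_ * _).
transitivity (\sum_s gprof k1 k2 s * w ((s^-1)%g i) 0).
  rewrite -(@sum_sigma m.+1 (fun s => gprof k1 k2 s * w ((s^-1)%g i) 0)).
  by apply: eq_bigr => l _; rewrite mulrC.
rewrite sum_gprof ZcycV invg1 perm1; congr (_ + _ * _).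
rewrite /sb mulr_sumr; apply: eq_bigr => b hb.
by rewrite pair_diff.
Qed.

Lemma ord_pred_val (i : 'I_m.+1) : i != ord0 -> val (ord_pred i) = i.-1.
Proof.
move=> hi; have hi0 : (0 < i)%N by rewrite lt0n; apply: contra hi => /eqP e; apply/eqP/val_inj.
rewrite /= (_ : (i + m.+1).-1 = i.-1 + m.+1)%N; last by rewrite -[in LHS](prednK hi0) addSn.
by rewrite modnDr modn_small // (leq_ltn_trans (leq_pred _) (ltn_ord i)).
Qed.

Lemma ord_pred0 : ord_pred (ord0 : 'I_m.+1) = ord_max.
Proof. by apply/val_inj; rewrite /= modn_small. Qed.

Lemma cnt1 : \sum_(b : 'I_m.+1 | (0 < b)%N) (1 : rat) = m%:R.
Proof.
rewrite big_mkcond big_ord_recl /= add0r.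
by rewrite sumr_const card_ord.
Qed.
Lemma sb0 : sb ord0 = m%:R.
Proof.
rewrite /sb -cnt1; apply: eq_bigr => b hb.
rewrite eqxx (_ : (ord0 == b) = false) ?subr0 //.
by apply/negbTE; apply/eqP => e; rewrite -e in hb.
Qed.

Lemma sbi (i : 'I_m.+1) : i != ord0 -> sb i = -1.
Proof.
move=> hi; rewrite /sb (negbTE hi) /= sumrB big1 ?sub0r; last by [].
have hi0 : (0 < i)%N by rewrite lt0n; apply: contra hi => /eqP e; apply/eqP/val_inj.
by rewrite (bigD1 i) //= eqxx big1 ?addr0 // => j /andP [_ /negbTE]; rewrite eq_sym => ->.
Qed.


Definition NN : rat := m.+1%:R.
Definition Gc : rat := 2 * NN * NN.
Definition Hc : rat := 4 * NN * NN.

Section W.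
Variable pi : {perm 'I_m.+1}.
Definition pos (j : 'I_m.+1) : nat := val ((pi^-1)%g j).
Definition rr : nat := pos ord0.
Definition lam (j : 'I_m.+1) : rat :=
  Hc * (pos j < rr)%N%:R + Gc + (m.+1 - pos j)%N%:R.
Definition uu (i : 'I_m.+1) : rat := \sum_(j : 'I_m.+1 | (i < j)%N) lam j.

Lemma NN_gt0 : 0 < NN. Proof. by rewrite /NN ltr0n. Qed.
Lemma Gc_gt0 : 0 < Gc. Proof. by rewrite /Gc !mulr_gt0 // NN_gt0. Qed.
Lemma Hc_gt0 : 0 < Hc. Proof. by rewrite /Hc !mulr_gt0 // NN_gt0. Qed.

Lemma lam_lo (j : 'I_m.+1) : Hc * (pos j < rr)%N%:R + Gc + 1 <= lam j.
Proof.
rewrite /lam lerD2l ler1n subn_gt0; exact: ltn_ord.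
Qed.

Lemma lam_hi (j : 'I_m.+1) : lam j <= Hc * (pos j < rr)%N%:R + Gc + NN.
Proof. by rewrite /lam lerD2l /NN ler_nat leq_subr. Qed.

Lemma lam_gt0 (j : 'I_m.+1) : 0 < lam j.
Proof.
apply: lt_le_trans (lam_lo j); rewrite -addrA ltr_wpDl //.
  by rewrite mulr_ge0 // ltW // Hc_gt0.
by rewrite addr_gt0 // Gc_gt0.
Qed.

Lemma uu_lt (i j : 'I_m.+1) : (i < j)%N -> uu j < uu i.
Proof.
move=> hij; rewrite /uu !(big_mkcond (fun k : 'I_m.+1 => (_ < k)%N)) /=.
rewrite -subr_gt0 -sumrB (bigD1 j) //= ltnn hij subr0.
rewrite ltr_pwDl ?lam_gt0 // sumr_ge0 // => k _.
case: ltnP => hik; case: ltnP => hjk //; rewrite ?subrr ?subr0 ?lexx ?ltW ?lam_gt0 //.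
by have := leq_trans (ltn_trans hij hjk) hik; rewrite ltnn.
Qed.

Lemma uu_pred (i : 'I_m.+1) : i != ord0 -> uu (ord_pred i) - uu i = lam i.
Proof.
move=> hi; have hi0 : (0 < i)%N by rewrite lt0n; apply: contra hi => /eqP e; apply/eqP/val_inj.
rewrite /uu !(big_mkcond (fun k : 'I_m.+1 => (_ < k)%N)) /= -sumrB (bigD1 i) //=.
have hv := ord_pred_val i hi; rewrite /= in hv; rewrite hv.
have e : forall k : nat, (i.-1 < k)%N = (i <= k)%N by move=> k; case: (nat_of_ord i) hi0.
rewrite e leqnn ltnn subr0 big1 ?addr0 // => k hk.
rewrite e leq_eqVlt.
have -> : (nat_of_ord i == k) = false by apply/negbTE; rewrite eq_sym; exact: hk.
by rewrite /= subrr.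
Qed.

Lemma uu_max : uu ord_max = 0.
Proof.
by rewrite /uu big_pred0 // => k; rewrite ltnNge -ltnS ltn_ord.
Qed.

Lemma D_lo : m%:R * Gc <= uu ord0.
Proof.
rewrite /uu -cnt1 mulr_suml; apply: ler_sum => j _; rewrite mul1r.
apply: le_trans (lam_lo j); rewrite -addrA addrCA lerDl addr_ge0 //.
by rewrite mulr_ge0 // ltW // Hc_gt0.
Qed.

Lemma f_sum : pi ord_max != ord0 ->
  \sum_(j : 'I_m.+1 | (0 < j)%N) ((pos j < rr)%N%:R : rat) <= m%:R - 1.
Proof.
move=> hpi; set jb := pi ord_max.
have hjb : (0 < jb)%N by rewrite lt0n; apply: contra hpi => /eqP e; apply/eqP/val_inj.
have hpos : pos jb = m by rewrite /pos /jb permK.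
have hr : (rr <= m)%N by rewrite -ltnS ltn_ord.
rewrite -cnt1 (bigD1 jb) //= [X in _ <= X - 1](bigD1 jb) //= hpos ltnNge hr /= add0r.
rewrite addrC addrK; apply: ler_sum => j _; by case: (_ < _)%N; [exact: lexx | exact: ler01].
Qed.

Lemma D_hi : pi ord_max != ord0 ->
  uu ord0 <= m%:R * (Gc + NN) + (m%:R - 1) * Hc.
Proof.
move=> hpi; apply: (@le_trans _ _ (\sum_(j : 'I_m.+1 | (0 < j)%N) (Hc * (pos j < rr)%N%:R + (Gc + NN)))).
  by apply: ler_sum => j _; rewrite addrA; apply: lam_hi.
rewrite big_split /= -mulr_sumr.
have -> : \sum_(i < m.+1 | (0 < i)%N) (Gc + NN) = m%:R * (Gc + NN).
  by rewrite -cnt1 mulr_suml; apply: eq_bigr => j _; rewrite mul1r.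
rewrite addrC lerD2l mulrC ler_pM2r ?Hc_gt0 //; exact: f_sum.
Qed.

Definition cc : rat := 2 * NN - 3.
Definition wv : 'cV[rat]_m.+1 := \col_i (uu i - (\sum_k uu k) / NN).

Lemma wv_diff (x y : 'I_m.+1) : wv x 0 - wv y 0 = uu x - uu y.
Proof. rewrite !mxE; ring. Qed.

Lemma Tv (k : rat) (i : 'I_m.+1) :
  (Tmat wv *m (k *: p0 (NN * cc) (cc + 2))) i 0 =
  k * (NN * cc * (uu (ord_pred i) - uu i) + (cc + 2) * (uu ord0 * sb i)).
Proof. by rewrite Tp !wv_diff uu_max subr0. Qed.

Lemma in_W_wv : in_W wv.
Proof.
split.
  by move=> i j hij; rewrite -subr_gt0 wv_diff subr_gt0; apply: uu_lt.
rewrite (eq_bigr (fun i => uu i - (\sum_k uu k) / NN)); last by move=> i _; rewrite mxE.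
rewrite sumrB sumr_const card_ord -mulr_natl mulrC divfK ?subrr //.
by rewrite /NN pnatr_eq0.
Qed.

Lemma pos_pi (a : 'I_m.+1) : pos (pi a) = a.
Proof. by rewrite /pos permK. Qed.

Lemma in_C_wv (hm2 : (2 <= m)%N) (k : rat) (hk : 0 < k) (hpi : pi ord_max != ord0) :
  in_C pi (Tmat wv *m (k *: p0 (NN * cc) (cc + 2))).
Proof.
move=> a b hab; rewrite !Tv ltr_pM2l //.
have hmN : m%:R = NN - 1 :> rat by rewrite /NN -natr1 addrK.
have h3 : (3 : rat) <= NN by rewrite /NN (ler_nat rat 3 m.+1).
have hDlo := D_lo; have hDhi := D_hi hpi.
rewrite hmN /Gc /Hc in hDlo hDhi.
have hab' : a != b by rewrite neq_ltn hab.
case: (eqVneq (pi a) ord0) => ha.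
  have hb : pi b != ord0 by rewrite -ha (inj_eq perm_inj) eq_sym.
  have hr : rr = a by rewrite /rr -ha pos_pi.
  rewrite ha ord_pred0 uu_max sb0 sbi // uu_pred // hmN.
  apply: ineqA => //.
  have := lam_hi (pi b); rewrite pos_pi hr ltnNge (ltnW hab) /= /Gc /Hc.
  by rewrite (_ : false%:R = 0 :> rat).
case: (eqVneq (pi b) ord0) => hb.
  have hr : rr = b by rewrite /rr -hb pos_pi.
  rewrite hb ord_pred0 uu_max sb0 sbi // uu_pred // hmN.
  apply: ineqB => //.
  have := lam_lo (pi a); rewrite pos_pi hr hab /Gc /Hc.
  by rewrite (_ : true%:R = 1 :> rat).
rewrite !sbi // !uu_pred // ltrD2r ltr_pM2l; last first.
  by rewrite mulr_gt0 ?NN_gt0 // /cc subr_gt0; lra.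
rewrite /lam !pos_pi -addrA -[X in _ < X]addrA.
apply: ler_ltD.
  apply: ler_wpM2l; first by rewrite ltW ?Hc_gt0.
  rewrite ler_nat.
  by case: (ltnP b rr) => // hbr; rewrite (ltn_trans hab hbr).
rewrite ltrD2l ltr_nat ltn_sub2l //.
Qed.
End W.
End P.

Theorem theorem3p6 (n : nat) (hn : (3 <= n)%N) :
  forall s : seq 'cV[rat]_(n`!),
    exists p : 'cV[rat]_(n`!),
      p \notin s /\
      forall pi : {perm 'I_n},
        (forall i : 'I_n, val i = n.-1 -> val (pi i) != 0%N) ->
        exists w : 'cV[rat]_n, in_W w /\ in_C pi (Tmat w *m p).
Proof.
case: n hn => [//|m] hn s.
have hm : (1 < m.+1)%N by apply: leq_trans hn.
have hm2 : (1 < m)%N by [].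
set q := p0 m (NN m * cc m) (cc m + 2).
have prop : forall k : rat, 0 < k -> forall pi : {perm 'I_m.+1},
    (forall i : 'I_m.+1, val i = m.+1.-1 -> val (pi i) != 0%N) ->
    exists w : 'cV[rat]_m.+1, in_W w /\ in_C pi (Tmat w *m (k *: q)).
  move=> k hk pi hpi; exists (wv m pi); split; first exact: in_W_wv.
  apply: in_C_wv => //.
  by have := hpi ord_max erefl; apply: contra => /eqP ->.
have [l0 hl0] : exists l0, q l0 0 != 0.
  case: (pickP (fun l => q l 0 != 0)) => [l0 hl0 | hall]; first by exists l0.
  have hq : q = 0.
    apply/matrixP => i j; rewrite (ord1 j) [RHS]mxE; apply/eqP/negbFE; exact: hall i.
  have [|w [_ hC]] := prop 1 ltr01 1%g.
    by move=> i hi; rewrite perm1 hi /=; rewrite -lt0n.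
  have h01 : ((Ordinal (ltn0Sn m)) < (Ordinal hm))%N by [].
  have := hC _ _ h01; rewrite hq scaler0 mulmx0 !mxE; by rewrite ltxx.
set S := \sum_(x <- s) `|x l0 0|.
set k := (1 + S) / `|q l0 0|.
have hq0 : 0 < `|q l0 0| by rewrite normr_gt0.
have hS : 0 <= S by rewrite /S big_seq sumr_ge0.
have hk : 0 < k by rewrite /k divr_gt0 // ltr_pwDl.
exists (k *: q); split; last exact: prop.
apply/negP => hin.
have : S = `|(k *: q) l0 0| + \sum_(y <- rem (k *: q) s) `|y l0 0|.
  by rewrite /S (big_rem _ hin).
rewrite mxE normrM (gtr0_norm hk) /k divfK ?gt_eqF // => hS'.
have : 0 <= \sum_(y <- rem (k *: q) s) `|y l0 0| by rewrite big_seq sumr_ge0.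
lra.
Qed.
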